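(* For every single-elimination tournament $\mathcal{T}$ with at least $2$ players and every scoring system $\sigma$ of $\mathcal{T}$, \[\dim(\mathcal{T},\sigma)\ge \max_{x\in M(\mathcal{T})}\Big(|P(x)|-\max_{u\in N^-(x)}|P(u)|\Big).\] Moreover, for every such $\mathcal{T}$ there exists a scoring system $\sigma$ for which equality holds.
   Context: A single-elimination tournament is a finite directed graph $\mathcal{T}$ such that: (a) $\mathcal{T}$ has exactly one sink (vertex with no out-neighbours); (b) every non-sink vertex has exactly one out-neighbour; (c) $\mathcal{T}$ has no directed cycles; (d) $|N^-(v)|\ne 1$ for every vertex $v$, where $N^-(v)$ (resp. $N^+(v)$) denotes the set of in-neighbours (resp. out-neighbours) of $v$. The players $P(\mathcal{T})$ are the sources (vertices with no in-neighbours) and the matches are $M(\mathcal{T})=V(\mathcal{T})\setminus P(\mathcal{T})$. For a vertex $u$, $P(u)$ is the set of players $a$ for which there is a directed walk from $a$ to $u$, i.e. a sequence $(u_1,\dots,u_t)$, $t\ge 1$, with $u_1=a$, $u_t=u$, $u_{i+1}\in N^+(u_i)$ (so $P(a)=\{a\}$ for a player $a$). A bracket is a function $B:V(\mathcal{T})\to P(\mathcal{T})$ with $B(a)=a$ for every player $a$ and $B(x)\in\{B(u):u\in N^-(x)\}$ for every match $x$. A scoring system is any function $\sigma:M(\mathcal{T})\to\mathbb{R}_{>0}$. For brackets $B,B'$ let $\mathrm{score}_\sigma(B,B')=\sum_{x\in M(\mathcal{T}):\,B(x)=B'(x)}\sigma(x)$. A set of brackets $\mathcal{B}$ is $\sigma$-resolving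 if for every pair of distinct brackets $B\ne B'$ there is $B_i\in\mathcal{B}$ with $\mathrm{score}_\sigma(B_i,B)\ne\mathrm{score}_\sigma(B_i,B')$. $\dim(\mathcal{T},\sigma)$ denotes the minimum size of a $\sigma$-resolving set. *)

(* Defs.v *)
From HB Require Import structures.
From mathcomp Require Import all_boot all_order all_algebra.
From mathcomp Require Import boolp reals.
Set Implicit Arguments. Unset Strict Implicit. Unset Printing Implicit Defensive.
Import Order.TTheory GRing.Theory Num.Theory.

(* A finite directed graph on the vertex type V with edge relation e:
   e u v means there is an arc u -> v (v is an out-neighbour of u). *)
Section SET.
Variable V : finType.
Variable e : rel V.

Definition in_nbrs (v : V) : {set V} := [set u | e u v].
Definition out_nbrs (v : V) : {set V} := [set w | e v w].

Definition is_sink (v : V) : bool := out_nbrs v == set0.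

Definition is_SET : Prop :=
  [/\ #|[set v | is_sink v]| = 1,
      (forall v, ~~ is_sink v -> #|out_nbrs v| = 1),
      (forall v w, e v w -> ~~ connect e w v)
    & (forall v, #|in_nbrs v| != 1)].

Definition players : {set V} := [set v | in_nbrs v == set0].
Definition matches : {set V} := ~: players.

Definition Pset (u : V) : {set V} := [set a in players | connect e a u].

Definition is_bracket (B : {ffun V -> V}) : bool :=
  [forall a in players, B a == a] &&
  [forall x in matches, [exists u in in_nbrs x, B x == B u]].

Variable R : realType.
Variable sigma : V -> R.   (* only its values on matches are used *)

Definition scoring_system : Prop := forall x, x \in matches -> (0 < sigma x)%R.

Definition score (B B' : {ffun V -> V}) : R :=
  (\sum_(x in matches | B x == B' x) sigma x)%R.

Definition resolving (S : {set {ffun V -> V}}) : Prop :=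
  (forall Bi, Bi \in S -> is_bracket Bi) /\
  (forall B B', is_bracket B -> is_bracket B' -> B != B' ->
     exists2 Bi, Bi \in S & score Bi B != score Bi B').

(* dim(T, sigma): the minimum size of a sigma-resolving set of brackets
   (the default value #|{ffun V -> V}| is never smaller than the minimum,
   as the set of all brackets is resolving). *)
Definition tdim : nat :=
  \big[minn/#|{ffun V -> V}|]_(S : {set {ffun V -> V}} | `[< resolving S >]) #|S|.

End SET.

Definition bound (V : finType) (e : rel V) : nat :=
  \max_(x in matches e) (#|Pset e x| - \max_(u in in_nbrs e x) #|Pset e u|).

(* Main.v *)
Require Import Defs.
From HB Require Import structures.
From mathcomp Require Import all_boot all_order all_algebra.
From mathcomp Require Import boolp reals.
From mathcomp Require Import zify.
From Stdlib Require Import Lia.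
Import Order.TTheory GRing.Theory Num.Theory.

Set Implicit Arguments. Unset Strict Implicit. Unset Printing Implicit Defensive.

Lemma inj_into (T U : finType) (A : {set T}) (I : {set U}) (u0 : U) :
  #|A| <= #|U| -> exists phi : T -> U,
  {in A &, injective phi} /\ #|I :\: [set phi a | a in A]| <= #|I| - #|A|.
Proof.
move=> hAU.
pose s := enum I ++ enum (~: I).
have ss : size s = #|U| by rewrite size_cat -!cardE cardsC.
have us : uniq s.
  rewrite cat_uniq !enum_uniq /= andbT; apply/hasPn => z.
  by rewrite !mem_enum inE.
pose phi := fun a => nth u0 s (index a (enum A)).
have hidx : forall a, a \in A -> index a (enum A) < #|A|.
  by move=> a ha; rewrite cardE index_mem mem_enum.
have inj : {in A &, injective phi}.
  move=> a b ha hb; rewrite /phi => /eqP.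
  have ka := hidx a ha; have kb := hidx b hb.
  rewrite (@nth_uniq _ u0 s (index a (enum A)) (index b (enum A))) ?ss //; try lia.
  move=> /eqP hi.
  have ea : a = nth a (enum A) (index a (enum A)) by rewrite nth_index // mem_enum.
  by rewrite {1}ea hi nth_index // mem_enum.
exists phi; split => //.
have cimg : #|[set phi a | a in A]| = #|A| by apply: card_in_imset.
case: (leqP #|A| #|I|) => hAI.
  have sub : [set phi a | a in A] \subset I.
    apply/subsetP => u /imsetP [a ha ->]; rewrite /phi nth_cat -cardE.
    rewrite (leq_trans (hidx _ ha) hAI).
    by rewrite -mem_enum mem_nth // -cardE (leq_trans (hidx _ ha) hAI).
  by rewrite cardsD (setIidPr sub) cimg.
have [a0 ha0] : exists a0, a0 \in A.
  by apply/set0Pn; rewrite -card_gt0; apply: leq_ltn_trans hAI.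
have sub : I \subset [set phi a | a in A].
  apply/subsetP => u hu; apply/imsetP.
  have hk : index u (enum I) < #|A|.
    by apply: ltn_trans hAI; rewrite cardE index_mem mem_enum.
  exists (nth a0 (enum A) (index u (enum I))).
    by rewrite -mem_enum mem_nth // -cardE.
  rewrite /phi index_uniq ?enum_uniq -?cardE //.
  by rewrite /s nth_cat index_mem mem_enum hu nth_index // mem_enum.
have -> : I :\: [set phi a | a in A] = set0.
  apply/setP => u; rewrite in_setD in_set0; case: (boolP (u \in I)) => hu; last by rewrite andbF.
  by rewrite (subsetP sub u hu).
by rewrite cards0.
Qed.

Section Tree.
Variables (V : finType) (e : rel V).
Hypothesis hS : is_SET e.

Lemma acyc v w : e v w -> ~~ connect e w v.
Proof. by case: hS => _ _ H _; apply: H. Qed.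

Lemma e_irr v : ~~ e v v.
Proof. by apply/negP => H; move: (acyc H); rewrite connect0. Qed.

Lemma out_uniq v w w' : e v w -> e v w' -> w = w'.
Proof.
move=> h1 h2; case: hS => _ hout _ _.
have ns : ~~ is_sink e v.
  by rewrite /is_sink; apply/set0Pn; exists w; rewrite inE.
have /eqP/cards1P [z hz] := hout v ns.
have : w \in out_nbrs e v by rewrite inE.
have : w' \in out_nbrs e v by rewrite inE.
by rewrite hz !inE => /eqP -> /eqP ->.
Qed.

Lemma connect_step u w : connect e u w -> u != w -> exists z, e u z /\ connect e z w.
Proof.
move=> /connectP [[|z p] /= hp hl]; first by rewrite hl eqxx.
move=> _; move/andP: hp => [h1 h2]; exists z; split => //.
by apply/connectP; exists p.
Qed.

Lemma connect_last u w : connect e u w -> u != w -> exists z, connect e u z /\ e z w.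
Proof.
move=> /connectP [p hp hl]; elim/last_ind: p hp hl => [|p z _] /=.
  by move=> _ ->; rewrite eqxx.
rewrite rcons_path last_rcons => /andP [h1 h2] hz _.
exists (last u p); split; last by rewrite hz.
by apply/connectP; exists p.
Qed.

Lemma comparable a u w : connect e a u -> connect e a w ->
  connect e u w \/ connect e w u.
Proof.
move=> /connectP [p hp ->]; elim: p a hp => [|z p IH] a /=; first by left.
move=> /andP [h1 h2] haw.
have [eaw|ne] := eqVneq a w; last first.
  have [z' [h1' h2']] := connect_step haw ne.
  rewrite -(out_uniq h1 h1') in h2'.
  exact: IH.
right; apply/connectP; exists (z :: p) => //=; by rewrite -eaw h1 h2.
Qed.

Lemma sib_disj x u w a : e u x -> e w x -> connect e a u -> connect e a w -> u = w.
Proof.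
move=> hu hw hau haw.
have H : forall u w, e u x -> e w x -> connect e u w -> u = w.
  move=> u' w' hu' hw' c; apply/eqP/negPn/negP => ne.
  have [z [h1 h2]] := connect_step c ne.
  rewrite -(out_uniq hu' h1) in h2.
  by move: (acyc hw'); rewrite h2.
by case: (comparable hau haw) => c; [apply: H | apply/esym/H].
Qed.

Lemma player_bottom a y : a \in players e -> connect e y a -> y = a.
Proof.
move=> ha c; apply/eqP/negPn/negP => ne.
have [z [_ hz]] := connect_last c ne.
move: ha; rewrite inE => /eqP h.
have : z \in in_nbrs e a by rewrite inE.
by rewrite h inE.
Qed.

Definition desc v := #|[set u | connect e u v]|.

Lemma desc_lt u v : e u v -> desc u < desc v.
Proof.
move=> huv; apply: proper_card; apply/properP; split.
  apply/subsetP => z; rewrite !inE => hz.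
  by apply: connect_trans hz (connect1 huv).
exists v; first by rewrite inE connect0.
by rewrite inE; apply: acyc.
Qed.

Lemma tree_ind (P : V -> Prop) :
  (forall v, (forall u, e u v -> P u) -> P v) -> forall v, P v.
Proof.
move=> H.
suff : forall n v, desc v <= n -> P v by move=> K v; exact: (K _ v (leqnn _)).
elim=> [|n IH] v hv; apply: H => u huv; have := desc_lt huv.
  by rewrite ltnNge (leq_trans hv).
by move=> h; apply: IH; rewrite -ltnS (leq_trans h).
Qed.

Lemma in_matches x : (x \in matches e) = (x \notin players e).
Proof. by rewrite inE. Qed.

Lemma in_players x : (x \in players e) = (in_nbrs e x == set0).
Proof. by rewrite inE. Qed.

Lemma match_child x : x \in matches e -> exists u, e u x.
Proof.
rewrite in_matches in_players => /set0Pn [u]; rewrite inE => h; by exists u.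
Qed.

Lemma child_match u x : e u x -> x \in matches e.
Proof.
move=> h; rewrite in_matches in_players; apply/set0Pn; exists u; by rewrite inE.
Qed.

Lemma other_child c y : e c y -> exists s, e s y /\ s != c.
Proof.
move=> hc; case: hS => _ _ _ hin.
have := hin y; apply: contraNP => /forallNP H.
apply/cards1P; exists c; apply/setP => z; rewrite !inE.
apply/idP/eqP => [hz|->//]; apply/eqP/negPn/negP => ne.
by apply: (H z); split.
Qed.

Lemma Pset_sub u x a : e u x -> a \in Pset e u -> a \in Pset e x.
Proof.
move=> h; rewrite !inE => /andP [-> c] /=.
exact: connect_trans c (connect1 h).
Qed.

Lemma Pset_child a x : a \in Pset e x -> x \in matches e ->
  exists u, e u x /\ a \in Pset e u.
Proof.
rewrite inE => /andP [ha c] hx.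
have ne : a != x by apply: contraTneq hx => <-; rewrite in_matches ha.
have [z [c1 c2]] := connect_last c ne.
by exists z; split; rewrite // inE ha.
Qed.

Lemma Pset_nonempty u : exists a, a \in Pset e u.
Proof.
elim/tree_ind: u => u IH.
case: (boolP (u \in players e)) => hu.
  by exists u; rewrite inE hu connect0.
have [c hc] : exists c, e c u by apply: match_child; rewrite in_matches.
have [a ha] := IH c hc; exists a; exact: Pset_sub hc ha.
Qed.

Lemma Pset_player a b : a \in players e -> b \in Pset e a -> b = a.
Proof. by move=> ha; rewrite inE => /andP [_ c]; exact: player_bottom ha c. Qed.

Lemma root_ex : exists r, forall y, connect e y r.
Proof.
have up : forall y, exists s, is_sink e s && connect e y s.
  suff : forall n y, #|V| - desc y <= n -> exists s, is_sink e s && connect e y s.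
    by move=> K y; exact: (K _ y (leqnn _)).
  elim=> [|n IH] y hy.
    case: (boolP (is_sink e y)) => hs; first by exists y; rewrite hs connect0.
    move/set0Pn: hs => [w]; rewrite inE => hw.
    have := desc_lt hw; have : desc w <= #|V| by apply: max_card.
    move: hy; rewrite leqn0 subn_eq0 => h1 h2 h3.
    by have := leq_ltn_trans h1 h3; rewrite ltnNge h2.
  case: (boolP (is_sink e y)) => hs; first by exists y; rewrite hs connect0.
  move/set0Pn: hs => [w]; rewrite inE => hw.
  have [s /andP [hs c]] : exists s, is_sink e s && connect e w s.
    apply: IH; have := desc_lt hw; have : desc w <= #|V| by apply: max_card.
    move=> h1 h2; rewrite leq_subLR in hy *.
    lia.
  by exists s; rewrite hs (connect_trans (connect1 hw) c).
case: hS => hs1 _ _ _.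
have /eqP/cards1P [r hr] := hs1.
exists r => y; have [s /andP [hs c]] := up y.
have : s \in [set v | is_sink e v] by rewrite inE.
by rewrite hr inE => /eqP <-.
Qed.


Section Descent.
Variable g : V -> V.
Hypothesis hg : forall y, y \in matches e -> e (g y) y.

Definition g' y := if y \in players e then y else g y.

Lemma iter_desc n y : iter n g' y \in players e \/ n + desc (iter n g' y) <= desc y.
Proof.
elim: n => [|n [IH|IH]] /=; first by right.
  by left; rewrite /g' IH.
rewrite {1}/g'; case: ifP => hp; first by left.
have hm : iter n g' y \in matches e by rewrite in_matches hp.
right; move: IH hp hm; set z := iter n g' y => IH hp hm.
have := desc_lt (hg hm); rewrite /g' hp; lia.
Qed.

Definition Bd y := iter #|V| g' y.

Lemma Bd_player y : Bd y \in players e.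
Proof.
case: (iter_desc #|V| y) => // h.
have h1 : desc y <= #|V| by apply: max_card.
have h2 : 0 < desc (Bd y).
  by rewrite /desc card_gt0; apply/set0Pn; exists (Bd y); rewrite inE connect0.
rewrite /Bd in h2; lia.
Qed.

Lemma Bd_fix a : a \in players e -> Bd a = a.
Proof. by move=> ha; apply: iter_fix; rewrite /g' ha. Qed.

Lemma Bd_step y : y \in matches e -> Bd y = Bd (g y).
Proof.
move=> hy; have hp : y \notin players e by rewrite -in_matches.
rewrite /Bd; have -> : g y = g' y by rewrite /g' (negbTE hp).
rewrite -iterSr iterS; have := Bd_player y; rewrite /Bd => h.
by rewrite [g' (iter _ _ _)]/g' h.
Qed.

Lemma Bd_inv (Q : pred V) y : (forall z, Q z -> Q (g' z)) -> Q y -> Q (Bd y).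
Proof. move=> H; rewrite /Bd; elim: #|V| => [|n IH] //= hy; apply: H; exact: IH. Qed.

Lemma bracket_Bd : is_bracket e [ffun y => Bd y].
Proof.
apply/andP; split; apply/forall_inP => y hy; rewrite ffunE.
  by rewrite Bd_fix.
apply/exists_inP; exists (g y); first by rewrite inE; apply: hg.
by rewrite ffunE Bd_step.
Qed.

End Descent.

Lemma iter_agree (f1 f2 : V -> V) x y n :
  (forall z, z != x -> f1 z = f2 z) -> (forall z, z != x -> f1 z != x) ->
  y != x -> iter n f1 y = iter n f2 y /\ iter n f1 y != x.
Proof.
move=> H1 H2 hy; elim: n => [|n [IH1 IH2]] //=.
by split; [rewrite -IH1 H1 | apply: H2].
Qed.


Lemma player_not_match a : a \in players e -> a \notin matches e.
Proof. by rewrite in_matches => ->. Qed.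

Definition toward a y := odflt y [pick c | e c y && connect e a c].

Lemma toward_spec a y : a \in players e -> y \in matches e -> connect e a y ->
  e (toward a y) y /\ connect e a (toward a y).
Proof.
move=> ha hy c.
have ne : a != y by apply: contraTneq hy => <-; apply: player_not_match.
have [z [c1 c2]] := connect_last c ne.
rewrite /toward; case: pickP => [w /andP [h1 h2]|H] //=.
by have := H z; rewrite c1 c2.
Qed.

Definition sib x y := odflt y [pick c | e c y && (c != x)].

Lemma sib_spec x y : e x y -> e (sib x y) y /\ sib x y != x.
Proof.
move=> h; have [s [h1 h2]] := other_child h.
rewrite /sib; case: pickP => [w /andP [k1 k2]|H] //=.
by have := H s; rewrite h1 h2.
Qed.

Definition dflt y := odflt y [pick c | e c y].

Lemma dflt_spec y : y \in matches e -> e (dflt y) y.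
Proof.
move=> /match_child [c hc]; rewrite /dflt; case: pickP => [w hw|H] //=.
by have := H c; rewrite hc.
Qed.

Definition gL x a1 a2 y :=
  if e x y then sib x y else if connect e a1 y then toward a1 y
  else if connect e a2 y then toward a2 y else dflt y.

Lemma gL_spec x a1 a2 y : a1 \in players e -> a2 \in players e ->
  y \in matches e -> e (gL x a1 a2 y) y.
Proof.
move=> h1 h2 hy; rewrite /gL.
case: ifP => k1; first by case: (sib_spec k1).
case: ifP => k2; first by case: (toward_spec h1 hy k2).
case: ifP => k3; first by case: (toward_spec h2 hy k3).
exact: dflt_spec.
Qed.

Definition gX x u a1 a2 y := if y == x then u else gL x a1 a2 y.

Lemma gX_spec x u a1 a2 y : e u x -> a1 \in players e -> a2 \in players e ->
  y \in matches e -> e (gX x u a1 a2 y) y.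
Proof.
move=> hu h1 h2 hy; rewrite /gX; case: eqP => [->//|_]; exact: gL_spec.
Qed.

Lemma reach x u a a1 a2 : e u x -> a \in Pset e u ->
  a1 \in players e -> a2 \in players e ->
  (a = a1 \/ (a = a2 /\ ~~ connect e a1 u)) ->
  Bd (gX x u a1 a2) x = a.
Proof.
move=> hu hau h1 h2 hcase.
have hx : x \in matches e by apply: child_match hu.
have hg := fun y => @gX_spec x u a1 a2 y hu h1 h2.
rewrite Bd_step // {2}/gX eqxx.
have ha : a \in players e by move: hau; rewrite inE => /andP [].
pose Q := fun z => connect e a z && connect e z u.
have : Q (Bd (gX x u a1 a2) u).
  apply: Bd_inv; last by rewrite /Q connect0 andbT; move: hau; rewrite inE => /andP [].
  move=> z /andP [qa qu]; rewrite /g'; case: ifP => hp; first by rewrite /Q qa qu.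
  have hz : z \in matches e by rewrite in_matches hp.
  have zx : z != x.
    by apply/eqP => ezx; move: (acyc hu); rewrite -ezx qu.
  have nxz : ~~ e x z.
    apply/negP => exz; move: (acyc hu).
    by rewrite (connect_trans (connect1 exz) qu).
  rewrite /gX (negbTE zx) /gL (negbTE nxz).
  case: hcase => [eq1|[eq2 n1]].
    rewrite -eq1 qa.
    have [k1 k2] := toward_spec ha hz qa.
    by rewrite /Q k2 (connect_trans (connect1 k1) qu).
  have -> : connect e a1 z = false.
    apply/negbTE; apply: contra n1 => c; exact: connect_trans c qu.
  rewrite -eq2 qa.
  have [k1 k2] := toward_spec ha hz qa.
  by rewrite /Q k2 (connect_trans (connect1 k1) qu).
move=> /andP [c _]; apply/esym/(player_bottom _ c).
exact: Bd_player.
Qed.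

Lemma agree x u1 u2 a1 a2 y : e u1 x -> e u2 x ->
  a1 \in players e -> a2 \in players e -> y != x ->
  Bd (gX x u1 a1 a2) y = Bd (gX x u2 a1 a2) y.
Proof.
move=> hu1 hu2 h1 h2 yx.
have H1 : forall z, z != x -> g' (gX x u1 a1 a2) z = g' (gX x u2 a1 a2) z.
  by move=> z zx; rewrite /g' /gX (negbTE zx).
have H2 : forall z, z != x -> g' (gX x u1 a1 a2) z != x.
  move=> z zx; rewrite /g' /gX (negbTE zx); case: ifP => hp //.
  have hz : z \in matches e by rewrite in_matches hp.
  apply/eqP => hxz; have := gL_spec x h1 h2 hz; rewrite hxz => exz.
  by have [_] := sib_spec exz; rewrite /gL exz in hxz; rewrite hxz eqxx.
have [E _] := iter_agree #|V| H1 H2 yx.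
by rewrite /Bd E.
Qed.


Definition dval x := #|Pset e x| - \max_(u in in_nbrs e x) #|Pset e u|.

Lemma counting x h (W : {set V}) : x \in matches e -> e h x ->
  (forall u a, e u x -> u != h -> a \in Pset e u -> a \in W) -> dval x <= #|W|.
Proof.
move=> hx hh H; rewrite /dval.
have m1 : #|Pset e h| <= \max_(u in in_nbrs e x) #|Pset e u|.
  by apply: (leq_bigmax_cond (F := fun u => #|Pset e u|)); rewrite inE.
have m2 : #|Pset e x| - #|Pset e h| <= #|Pset e x :\: Pset e h|.
  rewrite cardsD; apply: leq_sub2l; apply: subset_leq_card; exact: subsetIr.
have m3 : #|Pset e x :\: Pset e h| <= #|W|.
  apply: subset_leq_card; apply/subsetP => a; rewrite inE => /andP [nh ha].
  have [u [hu hau]] := Pset_child ha hx.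
  apply: (H u a hu) => //; apply: contraNneq nh => <-; done.
have := leq_sub2l #|Pset e x| m1; lia.
Qed.

Lemma lower_one (R : realType) (sigma : V -> R) S x :
  resolving e sigma S -> x \in matches e -> dval x <= #|S|.
Proof.
move=> [hSb hres] hx; rewrite leqNgt; apply/negP => hlt.
set W := [set B x | B : {ffun V -> V} in S].
have hW : #|W| <= #|S| by apply: leq_imset_card.
have key : exists u1 u2 a1 a2, [/\ e u1 x, e u2 x & u1 != u2] /\ [/\ a1 \in Pset e u1,
    a1 \notin W, a2 \in Pset e u2 & a2 \notin W].
  case: (pselect (exists u1 a1, [/\ e u1 x, a1 \in Pset e u1 & a1 \notin W]))
     => [[u1 [a1 [h1 h2 h3]]]|N].
    case: (pselect (exists u2 a2, [/\ e u2 x, u2 != u1, a2 \in Pset e u2 & a2 \notin W]))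
       => [[u2 [a2 [k1 k2 k3 k4]]]|N2].
      by exists u1, u2, a1, a2; split; split => //; rewrite eq_sym.
    exfalso; have := @counting x u1 W hx h1.
    have H : forall u a, e u x -> u != u1 -> a \in Pset e u -> a \in W.
      move=> u a hu hu1 ha; apply/negPn/negP => na; apply: N2.
      by exists u, a; split.
    move=> /(_ H) => h; lia.
  exfalso; have [h hh] := match_child hx.
  have H : forall u a, e u x -> u != h -> a \in Pset e u -> a \in W.
    move=> u a hu _ ha; apply/negPn/negP => na; apply: N.
    by exists u, a; split.
  have := @counting x h W hx hh H; lia.
have [u1 [u2 [a1 [a2 [[hu1 hu2 u12] [ha1 nW1 ha2 nW2]]]]]] := key.
have p1 : a1 \in players e by move: ha1; rewrite inE => /andP [].
have p2 : a2 \in players e by move: ha2; rewrite inE => /andP [].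
have n12 : ~~ connect e a1 u2.
  apply/negP => c; move/eqP: u12; apply.
  apply: (@sib_disj x u1 u2 a1) => //; by move: ha1; rewrite inE => /andP [].
pose B1 := [ffun y => Bd (gX x u1 a1 a2) y].
pose B2 := [ffun y => Bd (gX x u2 a1 a2) y].
have b1 : is_bracket e B1.
  by apply: bracket_Bd => y hy; apply: gX_spec.
have b2 : is_bracket e B2.
  by apply: bracket_Bd => y hy; apply: gX_spec.
have B1x : B1 x = a1 by rewrite ffunE (reach hu1 ha1 p1 p2 (or_introl erefl)).
have B2x : B2 x = a2 by rewrite ffunE (reach hu2 ha2 p1 p2 (or_intror (conj erefl n12))).
have a12 : a1 != a2.
  apply/eqP => ea; move/eqP: u12; apply.
  apply: (@sib_disj x u1 u2 a1) => //; first by move: ha1; rewrite inE => /andP [].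
  by rewrite ea; move: ha2; rewrite inE => /andP [].
have B12 : B1 != B2 by apply/eqP => eB; move: a12; rewrite -B1x eB B2x eqxx.
have [Bi hBi] := hres B1 B2 b1 b2 B12.
apply/negP; rewrite negbK /score; apply/eqP; apply: eq_bigl => y.
case: (eqVneq y x) => [->|yx].
  have hw : Bi x \in W by apply: imset_f.
  rewrite B1x B2x; have -> : (Bi x == a1) = false.
    by apply/negbTE; apply: contraNneq nW1 => <-.
  have -> : (Bi x == a2) = false.
    by apply/negbTE; apply: contraNneq nW2 => <-.
  done.
by rewrite !ffunE (agree hu1 hu2 p1 p2 yx).
Qed.


Section Build.
Variable m : nat.
Hypothesis hm : forall x, x \in matches e -> dval x <= m.

Definition cover (f : 'I_m -> V) y := exists h, e h y /\
  forall u a, e u y -> u != h -> a \in Pset e u -> exists i, f i = a.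

Definition good v (F : 'I_m -> V -> V) :=
  [/\ (forall i y, connect e y v -> y \in players e -> F i y = y),
      (forall i y, connect e y v -> y \in matches e -> exists c, e c y /\ F i y = F i c)
    & (forall y, connect e y v -> y \in matches e -> cover (fun i => F i y) y)].

Lemma good_Pset v F : good v F -> forall i y, connect e y v -> F i y \in Pset e y.
Proof.
move=> [g1 g2 _] i y; elim/tree_ind: y => y IH c.
case: (boolP (y \in players e)) => hy.
  by rewrite g1 // inE hy connect0.
have hy' : y \in matches e by rewrite in_matches.
have [c' [h1 h2]] := g2 i y c hy'.
rewrite h2; apply: (Pset_sub h1); apply: IH => //.
exact: connect_trans (connect1 h1) c.
Qed.

Lemma card_le1_inj (T : finType) (I : {set T}) : #|I| <= 1 -> forall i j, i \in I -> j \in I -> i = j.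
Proof.
move=> hI i j hi hj; apply/eqP/negPn/negP => ij.
have : [set i; j] \subset I by apply/subsetP => z; rewrite !inE => /orP [] /eqP ->.
move/subset_leq_card; rewrite cards2 ij; lia.
Qed.

Lemma build v : forall I : {set 'I_m}, #|I| <= #|Pset e v| ->
  exists F, good v F /\ {in I &, injective (fun i => F i v)}.
Proof.
elim/tree_ind: v => x IH I hI.
case: (boolP (x \in players e)) => hx.
  exists (fun i y => y); split; first split.
  - by [].
  - move=> i y c hy; exfalso; move: hy; rewrite (player_bottom hx c) in_matches hx //.
  - move=> y c hy; exfalso; move: hy; rewrite (player_bottom hx c) in_matches hx //.
  move=> i j hi hj _; apply: (card_le1_inj _ hi hj); apply: leq_trans hI _.
  rewrite -(cards1 x); apply: subset_leq_card; apply/subsetP => a ha.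
  by rewrite inE (Pset_player hx ha).
have hxm : x \in matches e by rewrite in_matches.
have [u0 hu0] := match_child hxm.
have cpos : 0 < #|in_nbrs e x| by rewrite card_gt0; apply/set0Pn; exists u0; rewrite inE.
have [h hh hmax] := eq_bigmax_cond (fun u => #|Pset e u|) cpos.
rewrite inE in hh.
have hle : forall u, e u x -> #|Pset e u| <= #|Pset e h|.
  move=> u hu; rewrite -hmax.
  by apply: (leq_bigmax_cond (F := fun u => #|Pset e u|)); rewrite inE.
have subh : Pset e h \subset Pset e x by apply/subsetP => a; apply: Pset_sub.
pose L := Pset e x :\: Pset e h.
have cL : #|L| = dval x by rewrite /dval hmax cardsD (setIidPr subh).
have [s [hs1 hs2]] := other_child hh.
have [a0 ha0] := Pset_nonempty s.
have a0L : a0 \in L.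
  rewrite inE (Pset_sub hs1 ha0) andbT; apply/negP => ah.
  move/eqP: hs2; apply; apply: (@sib_disj x s h a0) => //.
    by move: ha0; rewrite inE => /andP [].
  by move: ah; rewrite inE => /andP [].
have mpos : 0 < m.
  apply: leq_trans (hm hxm); rewrite -cL card_gt0; apply/set0Pn; by exists a0.
have cLm : #|L| <= #|'I_m| by rewrite card_ord cL; apply: hm.
have [phi [phiinj phicard]] := inj_into I (Ordinal mpos) cLm.
pose Iu u := if u == h then I :\: [set phi a | a in L] else [set phi a | a in Pset e u].
have HF : forall u, exists F, e u x -> good u F /\ {in Iu u &, injective (fun i => F i u)}.
  move=> u; case: (boolP (e u x)) => hu; last by exists (fun _ y => y).
  have cb : #|Iu u| <= #|Pset e u|.
    rewrite /Iu; case: eqP => [->|_]; last exact: leq_imset_card.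
    apply: leq_trans phicard _; rewrite cL /dval hmax.
    have := subset_leq_card subh; lia.
  have [F hF] := IH u hu (Iu u) cb.
  by exists F.
have [G hG] := choice HF.
pose br y := odflt x [pick u | e u x && connect e y u].
have br_eq : forall y u, e u x -> connect e y u -> br y = u.
  move=> y u hu c; rewrite /br; case: pickP => [w /andP [k1 k2]|H] /=.
    exact: (@sib_disj x w u y).
  by have := H u; rewrite hu c.
have br_spec : forall y, connect e y x -> y != x -> e (br y) x /\ connect e y (br y).
  move=> y c yx; have [z [c1 c2]] := connect_last c yx.
  by rewrite (br_eq y z c2 c1).
have Lx : forall a, a \in L -> connect e a x /\ a != x.
  move=> a; rewrite inE => /andP [_]; rewrite inE => /andP [pa ca]; split => //.
  by apply: contraTneq pa => ->; rewrite -in_matches.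
have Lp : forall a, a \in L -> a \in players e.
  by move=> a; rewrite !inE => /andP [_ /andP [->]].
pose c i := if [pick a in L | phi a == i] is Some a then br a else h.
have c_spec : forall i, e (c i) x.
  move=> i; rewrite /c; case: pickP => [a /andP [aL _]|_] //.
  by have [k1 k2] := Lx a aL; case: (br_spec a k1 k2).
have c_cases : forall i, (c i = h /\ i \notin [set phi a | a in L]) \/
    (c i != h /\ i \in [set phi a | a in Pset e (c i)]).
  move=> i; rewrite /c; case: pickP => [a /andP [aL /eqP pa]|H].
    have [k1 k2] := Lx a aL; have [b1 b2] := br_spec a k1 k2.
    right; split.
      apply/eqP => bh; have := aL; rewrite inE => /andP [nh _]; move/negP: nh; apply.
      by rewrite inE (Lp a aL) /= -bh.
    by apply/imsetP; exists a; rewrite // inE (Lp a).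
  left; split => //; apply/imsetP => [[a aL ia]].
  by have := H a; rewrite aL ia eqxx.
pose F i y := if y == x then G (c i) i (c i) else G (br y) i y.
have Fc : forall i, F i x = F i (c i).
  move=> i; rewrite /F eqxx.
  have cx : (c i == x) = false by apply/negbTE; apply: contraTneq (c_spec i) => ->; exact: e_irr.
  by rewrite cx (br_eq _ _ (c_spec i) (connect0 _ _)).
have Fy : forall i y, connect e y x -> y != x -> F i y = G (br y) i y.
  by move=> i y _ yx; rewrite /F (negbTE yx).
have gG : forall u, e u x -> good u (G u) by move=> u hu; case: (hG u hu).
have iG : forall u, e u x -> {in Iu u &, injective (fun i => G u i u)}.
  by move=> u hu; case: (hG u hu).
have PL : forall w a, e w x -> w != h -> a \in Pset e w -> a \in L.
  move=> w a hw wh ha; rewrite inE (Pset_sub hw ha) andbT; apply/negP => ah.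
  move/eqP: wh; apply; apply: (@sib_disj x w h a) => //.
    by move: ha; rewrite inE => /andP [].
  by move: ah; rewrite inE => /andP [].
have GP : forall u i, e u x -> G u i u \in Pset e u.
  by move=> u i hu; apply: (good_Pset (gG u hu)); exact: connect0.
exists F; split; first split.
- move=> i y cy hy.
  have yx : y != x by apply: contraTneq hy => ->; rewrite -in_matches.
  rewrite Fy //; have [b1 b2] := br_spec y cy yx.
  have [g1 _ _] := gG _ b1; exact: g1 i y b2 hy.
- move=> i y cy hy; case: (eqVneq y x) => [->|yx].
    by exists (c i); split; [exact: c_spec | exact: Fc].
  have [b1 b2] := br_spec y cy yx.
  have [_ g2 _] := gG _ b1; have [c' [k1 k2]] := g2 i y b2 hy.
  exists c'; split => //; rewrite Fy // k2.
  have c'x : c' != x.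
    by apply/eqP => ex; rewrite ex in k1; move: (acyc k1); rewrite cy.
  have cc : connect e c' x := connect_trans (connect1 k1) cy.
  by rewrite Fy // (br_eq c' (br y) b1 (connect_trans (connect1 k1) b2)).
- move=> y cy hy; case: (eqVneq y x) => [->|yx]; last first.
    have [b1 b2] := br_spec y cy yx.
    have [_ _ g3] := gG _ b1; have [h' [hh' Hc]] := g3 y b2 hy.
    exists h'; split => // u a hu uh ha.
    have [i hi] := Hc u a hu uh ha.
    by exists i; rewrite Fy.
  exists h; split => // u a hu uh ha.
  have iu := iG u hu; rewrite /Iu (negbTE uh) in iu.
  have phiu : {in Pset e u &, injective phi}.
    by move=> a1 a2 h1 h2; apply: phiinj; apply: (PL u).
  have img : [set G u i u | i in [set phi a | a in Pset e u]] = Pset e u.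
    apply/eqP; rewrite eqEcard; apply/andP; split.
      by apply/subsetP => z /imsetP [i _ ->]; apply: GP.
    by rewrite (card_in_imset iu) (card_in_imset phiu).
  move: ha; rewrite -img => /imsetP [i hi ->].
  exists i; rewrite /F eqxx.
  have [a' ha' ia'] := imsetP hi.
  suff -> : c i = u by [].
  case: (c_cases i) => [[ci nii]|[ci ii]].
    by move: nii; rewrite ia' (imset_f phi (PL u a' hu uh ha')).
  have [a'' ha'' ia''] := imsetP ii.
  have a12 : a'' = a'.
    apply: phiinj; rewrite -?ia'' -?ia' //; [exact: (PL _ _ (c_spec i) ci ha'') | exact: (PL u a' hu uh ha')].
  rewrite a12 in ha''.
  apply: (@sib_disj x (c i) u a' (c_spec i) hu).
    by move: ha''; rewrite inE => /andP [].
  by move: ha'; rewrite inE => /andP [].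
move=> i j hi hj /=; rewrite /F eqxx => E.
have vi := GP (c i) i (c_spec i); have vj := GP (c j) j (c_spec j).
rewrite E in vi.
have cij : c i = c j.
  apply: (@sib_disj x (c i) (c j) (G (c j) j (c j))); try exact: c_spec.
    by move: vi; rewrite inE => /andP [].
  by move: vj; rewrite inE => /andP [].
case: (c_cases i) => [[ci nii]|[ci ii]]; case: (c_cases j) => [[cj njj]|[cj jj]].
- rewrite ci cj in E; apply: (iG h hh) => //; rewrite /Iu eqxx inE ?nii ?njj //.
- by move: cj; rewrite -cij ci eqxx.
- by move: ci; rewrite cij cj eqxx.
- rewrite -cij in E jj; apply: (iG (c i) (c_spec i)) => //; rewrite /Iu (negbTE ci) //.
Qed.

End Build.


Lemma bracket_Pset B : is_bracket e B -> forall y, B y \in Pset e y.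
Proof.
move=> /andP [/forall_inP hp /forall_inP hm] y; elim/tree_ind: y => y IH.
case: (boolP (y \in players e)) => hy.
  by rewrite (eqP (hp y hy)) inE hy connect0.
have hy' : y \in matches e by rewrite in_matches.
have /exists_inP [u hu /eqP ->] := hm y hy'.
rewrite inE in hu; exact: Pset_sub hu (IH u hu).
Qed.

Lemma decode m r (F : 'I_m -> V -> V) : (forall y, connect e y r) -> good r F ->
  forall B B', is_bracket e B -> is_bracket e B' ->
  (forall i y, y \in matches e -> (F i y == B y) = (F i y == B' y)) -> B = B'.
Proof.
move=> hr gF B B' bB bB' H; apply/ffunP => v; elim/tree_ind: v => x IH.
have bP := bracket_Pset bB; have bP' := bracket_Pset bB'.
move: (bB) (bB') => /andP [/forall_inP hp /forall_inP hm] /andP [/forall_inP hp' /forall_inP hm'].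
case: (boolP (x \in players e)) => hx.
  by rewrite (eqP (hp x hx)) (eqP (hp' x hx)).
have [_ _ g3] := gF.
have {}hx : x \in matches e by rewrite in_matches.
have [h [hh Hc]] := g3 x (hr x) hx.
case: (pselect (exists i, F i x = B x)) => [[i hi]|N1].
  by have := H i x hx; rewrite hi eqxx => /esym/eqP.
case: (pselect (exists i, F i x = B' x)) => [[i hi]|N2].
  by have := H i x hx; rewrite hi eqxx => /eqP.
have /exists_inP [u hu /eqP Bu] := hm x hx.
have /exists_inP [u' hu' /eqP Bu'] := hm' x hx.
rewrite inE in hu; rewrite inE in hu'.
have uh : u = h.
  apply/eqP/negPn/negP => nuh; apply: N1; rewrite Bu; by case: (Hc u (B u) hu nuh (bP u)) => i hi; exists i.
have uh' : u' = h.
  apply/eqP/negPn/negP => nuh; apply: N2; rewrite Bu'; by case: (Hc u' (B' u') hu' nuh (bP' u')) => i hi; exists i.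
by rewrite Bu Bu' uh uh' IH.
Qed.

End Tree.

Lemma bits n (b b' : 'I_n -> bool) :
  \sum_(i < n) b i * 2 ^ i = \sum_(i < n) b' i * 2 ^ i -> b =1 b'.
Proof.
elim: n b b' => [|n IH] b b' E; first by case.
have D : forall c : 'I_n.+1 -> bool, \sum_(i < n.+1) c i * 2 ^ i =
    c ord0 + 2 * \sum_(i < n) c (lift ord0 i) * 2 ^ i.
  move=> c; rewrite big_ord_recl expn0 muln1; congr (_ + _).
  rewrite big_distrr; apply: eq_bigr => i _; rewrite lift0 expnS.
  by rewrite mulnCA.
move: E; rewrite !D => E.
have e0 : b ord0 = b' ord0.
  by move: E; case: (b ord0); case: (b' ord0) => //= E; lia.
have E' : \sum_(i < n) b (lift ord0 i) * 2 ^ i = \sum_(i < n) b' (lift ord0 i) * 2 ^ i.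
  rewrite e0 in E; lia.
have IH' := IH _ _ E'.
move=> i; case: (unliftP ord0 i) => [j ->|->] //.
Qed.

Lemma bigmin_le (T : finType) (P : pred T) (F : T -> nat) z j :
  P j -> \big[minn/z]_(i | P i) F i <= F j.
Proof.
move=> Pj; move: (mem_index_enum j); elim: (index_enum T) => [//|a s IHs].
rewrite in_cons big_cons => /orP [/eqP <-|js].
  by rewrite Pj geq_minl.
case: (P a) => /=; [exact: leq_trans (geq_minr _ _) (IHs js) | exact: IHs js].
Qed.

Definition sig2 (R : realType) (V : finType) (y : V) : R := ((2 ^ enum_rank y)%:R)%R.

Lemma sum_rank (V : finType) (P : pred V) :
  \sum_(x | P x) 2 ^ enum_rank x = \sum_(i < #|V|) P (enum_val i) * 2 ^ i.
Proof.
rewrite (reindex (fun i : 'I_#|V| => enum_val i)) /=; last first.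
  by exists enum_rank => i _; rewrite ?enum_valK ?enum_rankK.
rewrite big_mkcond /=; apply: eq_bigr => i _; rewrite enum_valK.
by case: (P (enum_val i)); rewrite ?mul1n ?mul0n.
Qed.

Lemma score_pow (R : realType) (V : finType) (e : rel V) (B1 B2 B3 : {ffun V -> V}) :
  score e (@sig2 R V) B1 B2 = score e (@sig2 R V) B1 B3 ->
  forall y, y \in matches e -> (B1 y == B2 y) = (B1 y == B3 y).
Proof.
rewrite /score /sig2 -!natr_sum => /eqP; rewrite eqr_nat => /eqP.
rewrite !sum_rank => /bits E y hy.
by have := E (enum_rank y); rewrite enum_rankK hy.
Qed.


Theorem theorem1p8 (R : realType) (V : finType) (e : rel V) :
  is_SET e -> 2 <= #|players e| ->
  (forall sigma : V -> R, scoring_system e sigma -> bound e <= tdim e sigma) /\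
  (exists sigma : V -> R, scoring_system e sigma /\ tdim e sigma = bound e).
Proof.
move=> hS _.
have LB : forall sigma : V -> R, bound e <= tdim e sigma.
  move=> sigma; rewrite /tdim; apply: (big_ind (fun n => bound e <= n)).
  - apply/bigmax_leqP => x hx.
    have h1 : #|Pset e x| <= #|V| by apply: max_card.
    have h0 : 0 < #|V| by apply/card_gt0P; exists x.
    have h2 : #|V| <= #|V| ^ #|V|.
      by rewrite -{1}(expn1 #|V|); apply: leq_pexp2l.
    rewrite card_ffun; lia.
  - by move=> a b ha hb; rewrite leq_min ha hb.
  - move=> S /asboolP hres; apply/bigmax_leqP => x hx.
    exact: (lower_one hS hres hx).
split; first by move=> sigma _; apply: LB.
exists (@sig2 R V); split.
  by move=> x _; rewrite /sig2 ltr0n expn_gt0.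
apply/eqP; rewrite eqn_leq LB andbT.
have [r hr] := root_ex hS.
have hm : forall x, x \in matches e -> dval e x <= bound e.
  by move=> x hx; apply: (leq_bigmax_cond (F := fun x => dval e x)).
have c0 : #|(set0 : {set 'I_(bound e)})| <= #|Pset e r| by rewrite cards0.
have [F [gF _]] := build hS hm c0.
pose S0 := [set [ffun y => F i y] | i : 'I_(bound e)].
have res : resolving e (@sig2 R V) S0.
  have [g1 g2 _] := gF.
  split.
    move=> Bi /imsetP [i _ ->]; apply/andP; split.
      by apply/forall_inP => y hy; rewrite ffunE g1.
    apply/forall_inP => y hy; have [c [hc Fc]] := g2 i y (hr y) hy.
    by apply/exists_inP; exists c; rewrite ?inE // !ffunE Fc.
  move=> B B' bB bB' ne.
  case: (pselect (exists2 Bi, Bi \in S0 & score e (@sig2 R V) Bi B != score e (@sig2 R V) Bi B')) => // N.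
  exfalso; move/eqP: ne; apply; apply: (decode hS hr gF bB bB') => i y hy.
  have Bi0 : [ffun y => F i y] \in S0 by apply: imset_f.
  have E : score e (@sig2 R V) [ffun y => F i y] B = score e (@sig2 R V) [ffun y => F i y] B'.
    by apply/eqP/negPn/negP => nE; apply: N; exists [ffun y => F i y].
  by have := score_pow E hy; rewrite !ffunE.
apply: leq_trans (bigmin_le _ _ (j := S0) _) _.
  exact/asboolP.
by apply: leq_trans (leq_imset_card _ _) _; rewrite card_ord.
Qed.
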